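(* For any $n\in\mathbb{N}$, the monoids $\mathrm{rps}_n$ and $\mathrm{lps}_n$ have word problem solvable in quadratic time.
   Context: Let $\mathcal{A}_n=\{1<2<\cdots<n\}$. An lPS tableau is a finite (possibly empty) sequence of nonempty bottom-justified columns of boxes filled with positive integers, such that the entries of each column are strictly decreasing from top to bottom and the bottom entries of the columns form a weakly increasing sequence from left to right. An rPS tableau is defined in the same way but with columns weakly decreasing from top to bottom and the bottom row strictly increasing from left to right. Right insertion of a symbol $a$ into an lPS tableau $B$: if $a$ is greater than or equal to every entry of the bottom row, append a new column consisting of $a$ at the right end; otherwise, let $z$ be the leftmost bottom-row entry with $z>a$ and put $a$ in a new box at the bottom of the column of $z$ (the previous entries of that column move up one box). Right insertion into an rPS tableau is the same except that a new column is created iff $a$ is strictly greater than every bottom-row entry, and otherwise $z$ is the leftmost bottom-row entry with $z\geq a$. For $w=w_1\cdots w_k$, $\mathfrak{R}_\ell(w)$ (resp. $\mathfrak{R}_r(w)$) is obtained by starting with the empty lPS (resp. rPS) tableau and right-inserting $w_1,\dots,w_k$ in order. The monoid $\mathrm{lps}_n$ (resp. $\mathrm{rps}_n$) is the quotient of $\mathcal{A}_n^*$ by the congruence $u\equiv v\iff\mathfrak{R}_\ell(u)=\mathfrak{R}_\ell(v)$ (resp. $\mathfrak{R}_r(u)=\mathfrak{R}_r(v)$). The word problem (with respect to the generating set $\mathcal{A}_n$) asks, given $u,v\in\mathcal{A}_n^*$, whether they represent the same element; time is measured in $|u|+|v|$. *)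

(* Defs.v *)
From mathcomp Require Import all_boot.
Set Implicit Arguments.
Unset Strict Implicit.
Unset Printing Implicit Defensive.

(* Letters of A_n = {1<...<n} are represented by 'I_n (i : 'I_n stands  *)
(* for the letter i+1; the order is preserved).                          *)
(* A tableau is a sequence of columns (left to right); each column is    *)
(* listed from its BOTTOM box upwards, so the bottom entry is the head.  *)

Section PS.
Variable n : nat.

Fixpoint ins_l (a : 'I_n) (B : seq (seq 'I_n)) : seq (seq 'I_n) :=
  match B with
  | [::] => [:: [:: a]]
  | col :: B' => if a < head a col then (a :: col) :: B' else col :: ins_l a B'
  end.

Fixpoint ins_r (a : 'I_n) (B : seq (seq 'I_n)) : seq (seq 'I_n) :=
  match B with
  | [::] => [:: [:: a]]
  | col :: B' => if (col != [::]) && (a <= head a col)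
                 then (a :: col) :: B' else col :: ins_r a B'
  end.

Definition Rl (w : seq 'I_n) : seq (seq 'I_n) := foldl (fun B a => ins_l a B) [::] w.
Definition Rr (w : seq 'I_n) : seq (seq 'I_n) := foldl (fun B a => ins_r a B) [::] w.

(* u and v represent the same element of lps_n (resp. rps_n) *)
Definition lps_eq (u v : seq 'I_n) : bool := Rl u == Rl v.
Definition rps_eq (u v : seq 'I_n) : bool := Rr u == Rr v.

End PS.

Inductive move := MoveL | MoveR | MoveN.

Record TM (In : Type) : Type := MkTM {
  tm_state : finType;
  tm_sym : finType;
  tm_blank : tm_sym;
  tm_enc : In -> tm_sym;
  tm_start : tm_state;
  tm_halt : pred tm_state;
  tm_acc : pred tm_state;
  tm_delta : tm_state -> tm_sym -> tm_state * tm_sym * move }.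
Arguments tm_halt {In} t _.
Arguments tm_acc {In} t _.
Arguments tm_delta {In} t _ _.
Arguments tm_enc {In} t _.
Arguments tm_blank {In} t.
Arguments tm_start {In} t.

Section TMsem.
Variables (In : Type) (M : TM In).

(* configuration: state, reversed left part, scanned symbol, right part;
   all cells outside are blank *)
Definition config : Type :=
  (tm_state M * (seq (tm_sym M) * tm_sym M * seq (tm_sym M)))%type.

Definition init_config (w : seq In) : config :=
  (tm_start M,
   match w with
   | [::] => ([::], tm_blank M, [::])
   | a :: w' => ([::], tm_enc M a, map (tm_enc M) w')
   end).

Definition tm_step (c : config) : config :=
  let: (q, (l, x, r)) := c in
  if tm_halt M q then c else
  let: (q', y, m) := tm_delta M q x in
  match m with
  | MoveN => (q', (l, y, r))
  | MoveL => match l with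
             | [::] => (q', ([::], tm_blank M, y :: r))
             | z :: l' => (q', (l', z, y :: r))
             end
  | MoveR => match r with
             | [::] => (q', (y :: l, tm_blank M, [::]))
             | z :: r' => (q', (y :: l, z, r'))
             end
  end.

Definition run (t : nat) (w : seq In) : config := iter t tm_step (init_config w).

Definition decides_within (w : seq In) (t : nat) (b : bool) : Prop :=
  tm_halt M (run t w).1 /\ tm_acc M (run t w).1 = b.

End TMsem.

Definition word_problem_quadratic (n : nat) (eqw : seq 'I_n -> seq 'I_n -> bool) : Prop :=
  exists (M : TM (option 'I_n)) (c : nat),
    forall u v : seq 'I_n,
      decides_within M (map Some u ++ None :: map Some v)
                     (c * (size u + size v).+1 ^ 2) (eqw u v).

(* Main.v *)
Require Import Defs.
From mathcomp Require Import all_boot zify.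
Set Implicit Arguments.
Unset Strict Implicit.
Unset Printing Implicit Defensive.

Fixpoint sweep (S A : Type) (f : S -> A -> A * S) (s : S) (xs : seq A) : seq A * S :=
  match xs with
  | [::] => ([::], s)
  | x :: xs' => let p := f s x in let q := sweep f p.2 xs' in (p.1 :: q.1, q.2)
  end.

Lemma sweep_cat (S A : Type) (f : S -> A -> A * S) s xs ys xs' s1 ys' s2 :
  sweep f s xs = (xs', s1) -> sweep f s1 ys = (ys', s2) ->
  sweep f s (xs ++ ys) = (xs' ++ ys', s2).
Proof.
elim: xs s xs' => [|x xs IH] s xs' /=; first by case=> <- <-.
case E: (sweep f (f s x).2 xs) => [a b] [<- Eb] H2; subst b.
by rewrite (IH _ _ E H2).
Qed.

Lemma sweep_size (S A : Type) (f : S -> A -> A * S) s xs :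
  size (sweep f s xs).1 = size xs.
Proof. by elim: xs s => [|x xs IH] s //=; rewrite IH. Qed.

Section Tab.
Variable n : nat.
Variable P : 'I_n -> 'I_n -> bool.

Fixpoint insg (a : 'I_n) (B : seq (seq 'I_n)) : seq (seq 'I_n) :=
  match B with
  | [::] => [:: [:: a]]
  | col :: B' => if (col != [::]) && P a (head a col)
                 then (a :: col) :: B' else col :: insg a B'
  end.

Definition Rg (w : seq 'I_n) := foldl (fun B a => insg a B) [::] w.

Definition item := ('I_n * bool)%type.

Definition encc (col : seq 'I_n) : seq item :=
  match col with [::] => [::] | x :: c => (x, true) :: map (fun y => (y, false)) c end.

Definition encT (B : seq (seq 'I_n)) : seq item := flatten (map encc B).

Definition insst := option ('I_n + item).

Definition stepB (s : insst) (x : option item) : option item * insst :=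
  match s with
  | None => (x, None)
  | Some (inl a) => match x with
      | None => (Some (a, true), None)
      | Some (y, true) => if P a y then (Some (a, true), Some (inr (y, false))) else (x, s)
      | Some (y, false) => (x, s)
      end
  | Some (inr it) => match x with None => (Some it, None) | Some y => (Some it, Some (inr y)) end
  end.

Lemma sweep_idle xs : sweep stepB None xs = (xs, None).
Proof. by elim: xs => //= x xs ->. Qed.

Lemma sweep_shift it ys m :
  sweep stepB (Some (inr it)) (map Some ys ++ None :: nseq m None)
  = (map Some (it :: ys) ++ nseq m None, None).
Proof.
elim: ys it => [|y ys IH] it /=; first by rewrite sweep_idle.
by rewrite IH.
Qed.

Lemma sweep_false a c rest :
  sweep stepB (Some (inl a)) (map Some (map (fun y => (y, false)) c) ++ rest)
  = let q := sweep stepB (Some (inl a)) rest in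
    (map Some (map (fun y => (y, false)) c) ++ q.1, q.2).
Proof. by elim: c => [|y c IH] /=; [case: sweep | rewrite IH]. Qed.

Lemma sweep_ins a B m :
  sweep stepB (Some (inl a)) (map Some (encT B) ++ None :: nseq m None)
  = (map Some (encT (insg a B)) ++ nseq m None, None).
Proof.
elim: B => [|col B IH] /=; first by rewrite sweep_idle.
case: col => [|x c] //=.
case: ifP => Pax /=.
  by rewrite map_cat -map_cat sweep_shift /= !map_cat.
rewrite map_cat -catA sweep_false /= IH /=.
by rewrite map_cat catA.
Qed.

Lemma size_encT_ins a B : size (encT (insg a B)) = (size (encT B)).+1.
Proof.
elim: B => [|col B IH] //=.
case: col => [|x c] //=; case: ifP => _ //=; rewrite !size_cat ?IH //= ?size_map.
by rewrite addnS.
Qed.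

Lemma size_encT_Rg w : size (encT (Rg w)) = size w.
Proof.
rewrite /Rg -(revK w) size_rev; elim: (rev w) => [|a w' IH] //=.
by rewrite rev_cons -cats1 foldl_cat /= size_encT_ins IH.
Qed.

Definition nonemp (B : seq (seq 'I_n)) := all (fun c => c != [::]) B.

Lemma nonemp_ins a B : nonemp B -> nonemp (insg a B).
Proof.
elim: B => [|col B IH] //= /andP[ncol nB].
by case: ifP => _ /=; rewrite ?ncol ?nB ?IH.
Qed.

Lemma nonemp_Rg w : nonemp (Rg w).
Proof.
rewrite /Rg; have : nonemp [::] by [].
elim: w [::] => [|a w IH] B //= nB; apply: IH; exact: nonemp_ins.
Qed.

Definition headtrue (T : seq item) := if T is (_, b) :: _ then b else true.

Lemma headtrue_enc B : nonemp B -> headtrue (encT B).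
Proof. by case: B => [|[|x c] B] //=. Qed.

Lemma map_false_inj c c' T1 T2 :
  headtrue T1 -> headtrue T2 ->
  map (fun y => (y, false)) c ++ T1 = map (fun y => (y, false)) c' ++ T2 ->
  c = c' /\ T1 = T2.
Proof.
elim: c c' => [|y c IH] [|y' c'] //=.
- by move=> h1 h2 E; subst T1.
- by move=> h1 h2 E; subst T2.
- move=> h1 h2 [-> E]; by have [-> ->] := IH _ h1 h2 E.
Qed.

Lemma encT_inj B1 B2 : nonemp B1 -> nonemp B2 -> encT B1 = encT B2 -> B1 = B2.
Proof.
rewrite /nonemp; elim: B1 B2 => [|c1 B1 IH] [|c2 B2] //=.
- by case: c2.
- by case: c1.
case: c1 => [|x1 c1] //= n1; case: c2 => [|x2 c2] //= n2.
case=> -> /(map_false_inj (headtrue_enc n1) (headtrue_enc n2)) [-> E].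
by rewrite (IH _ n1 n2 E).
Qed.

End Tab.

Section Mach.
Variable n : nat.
Variable P : 'I_n -> 'I_n -> bool.

Definition inp := option (option 'I_n).
Definition oitem := option (item n).
Definition cell := (inp * oitem * oitem)%type.
Definition pickst := (bool * option 'I_n * option 'I_n)%type.
Definition rst := (insst n * insst n * pickst * bool * bool)%type.
Definition lst := (option 'I_n * option 'I_n)%type.

Definition stepI (ps : pickst) (i : inp) : inp * pickst :=
  let: (side, pu, pv) := ps in
  match i with
  | None => (None, (true, pu, pv))
  | Some None => (i, ps)
  | Some (Some a) =>
      if side then (if pv is None then (Some None, (side, pu, Some a)) else (i, ps))
      else (if pu is None then (Some None, (side, Some a, pv)) else (i, ps))
  end.

Definition rstep (st : rst) (c : cell) : cell * rst :=
  let: (sB, sC, ps, e, act) := st in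
  let: (i, b, cc) := c in
  let pI := stepI ps i in let pB := stepB P sB b in let pC := stepB P sC cc in
  ((pI.1, pB.1, pC.1), (pB.2, pC.2, pI.2, e && (pB.1 == pC.1), act)).

Lemma sweep_zip I B C I' B' C' pi pi' sB sB' sC sC' e act :
  size I = size B -> size B = size C ->
  sweep stepI pi I = (I', pi') -> sweep (stepB P) sB B = (B', sB') ->
  sweep (stepB P) sC C = (C', sC') ->
  sweep rstep (sB, sC, pi, e, act) (zip (zip I B) C) =
  (zip (zip I' B') C', (sB', sC', pi', e && (B' == C'), act)).
Proof.
elim: I B C I' B' C' pi sB sC e => [|i I IH] [|b B] [|c C] //= I' B' C' pi sB sC e.
  by move=> _ _ [<- <-] [<- <-] [<- <-]; rewrite andbT.
move=> [sIB] [sBC].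
case EI: (sweep stepI (stepI pi i).2 I) => [I1 p1] [<- Ep1]; subst p1.
case EB: (sweep (stepB P) (stepB P sB b).2 B) => [B1 b1] [<- Eb1]; subst b1.
case EC: (sweep (stepB P) (stepB P sC c).2 C) => [C1 c1] [<- Ec1]; subst c1.
rewrite (IH _ _ _ _ _ _ _ _ _ sIB sBC EI EB EC) /=.
by rewrite eqseq_cons andbA.
Qed.

Definition Iu (w : seq 'I_n) d : seq inp :=
  nseq d (Some None) ++ map (fun a => Some (Some a)) (drop d w).
Definition nd (w : seq 'I_n) d := if d < size w then d.+1 else d.

Lemma size_Iu w d : d <= size w -> size (Iu w d) = size w.
Proof. by move=> h; rewrite size_cat size_nseq size_map size_drop; lia. Qed.

Lemma sweepI_done ps d : sweep stepI ps (nseq d (Some None)) = (nseq d (Some None), ps).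
Proof. by case: ps => [[s pu] pv]; elim: d => //= d ->. Qed.

Lemma sweepI_rawL a o r :
  sweep stepI (false, Some a, o) (map (fun a => Some (Some a)) r)
  = (map (fun a => Some (Some a)) r, (false, Some a, o)).
Proof. by elim: r => //= x r ->. Qed.

Lemma sweepI_rawR a o r :
  sweep stepI (true, o, Some a) (map (fun a => Some (Some a)) r)
  = (map (fun a => Some (Some a)) r, (true, o, Some a)).
Proof. by elim: r => //= x r ->. Qed.

Lemma drop_nd w d a r : drop d w = a :: r -> drop d.+1 w = r /\ nd w d = d.+1.
Proof.
move=> E; have hd : d < size w.
  by rewrite ltnNge; apply/negP => /drop_oversize; rewrite E.
split; last by rewrite /nd hd.
by rewrite -add1n -drop_drop E /= drop0.
Qed.

Lemma drop_nd0 w d : d <= size w -> drop d w = [::] -> nd w d = d.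
Proof.
move=> h E; have : size (drop d w) = 0 by rewrite E.
by rewrite size_drop /nd; case: ifP => //; lia.
Qed.

Lemma sweepI_L w d o : d <= size w ->
  sweep stepI (false, None, o) (Iu w d) = (Iu w (nd w d), (false, ohead (drop d w), o)).
Proof.
move=> h; rewrite /Iu.
case E: (drop d w) => [|a r].
  by rewrite (drop_nd0 h E) E cats0 sweepI_done.
have [E1 ->] := drop_nd E.
rewrite E1 -addn1 nseqD -catA /=.
apply: (sweep_cat (sweepI_done _ _)) => /=.
by rewrite sweepI_rawL.
Qed.

Lemma sweepI_R w d o : d <= size w ->
  sweep stepI (true, o, None) (Iu w d) = (Iu w (nd w d), (true, o, ohead (drop d w))).
Proof.
move=> h; rewrite /Iu.
case E: (drop d w) => [|a r].
  by rewrite (drop_nd0 h E) E cats0 sweepI_done.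
have [E1 ->] := drop_nd E.
rewrite E1 -addn1 nseqD -catA /=.
apply: (sweep_cat (sweepI_done _ _)) => /=.
by rewrite sweepI_rawR.
Qed.

Lemma sweepI_all u v du dv : du <= size u -> dv <= size v ->
  sweep stepI (false, None, None) (Iu u du ++ None :: Iu v dv) =
  (Iu u (nd u du) ++ None :: Iu v (nd v dv), (true, ohead (drop du u), ohead (drop dv v))).
Proof.
move=> hu hv; apply: (sweep_cat (sweepI_L _ hu)) => /=.
by rewrite (sweepI_R _ hv).
Qed.

End Mach.

Section TMdef.
Variable n : nat.
Variable P : 'I_n -> 'I_n -> bool.

Definition ist (o : option 'I_n) : insst n := if o is Some a then Some (inl a) else None.
Definition initR (p : lst n) : rst n :=
  (ist p.1, ist p.2, (false, None, None), true, (p.1 != None) || (p.2 != None)).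
Definition finalR (st : rst n) : bool :=
  let: (_, _, (_, pu, pv), _, act) := st in ~~ act && (pu == None) && (pv == None).
Definition picks (st : rst n) : lst n := let: (_, _, (_, pu, pv), _, _) := st in (pu, pv).
Definition eqf (st : rst n) : bool := let: (_, _, _, e, _) := st in e.

Arguments finalR : simpl never.
Arguments picks : simpl never.
Arguments eqf : simpl never.
Arguments initR : simpl never.

Definition stT : finType := ((rst n + lst n) + bool)%type.
Definition symT : finType := option (cell n).

Definition delta (q : stT) (x : symT) : stT * symT * move :=
  match q with
  | inl (inl st) => match x with
      | Some c => (inl (inl (rstep P st c).2), Some (rstep P st c).1, MoveR)
      | None => if finalR st then (inr (eqf st), None, MoveN)
                else (inl (inr (picks st)), None, MoveL)
      end
  | inl (inr p) => match x with
      | Some c => (q, Some c, MoveL)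
      | None => (inl (inl (initR p)), None, MoveR)
      end
  | inr b => (q, x, MoveN)
  end.

Definition encC (x : option 'I_n) : cell n :=
  (match x with Some a => Some (Some a) | None => None end, None, None).

Definition Mach : TM (option 'I_n) :=
  @MkTM _ stT symT None (fun x => Some (encC x)) (inl (inr (None, None)))
    (fun q => if q is inr _ then true else false)
    (fun q => if q is inr b then b else false)
    delta.

Notation step := (@tm_step _ Mach).

Lemma step_R st c l r :
  step (inl (inl st), (l, Some c, r)) =
  (inl (inl (rstep P st c).2), (Some (rstep P st c).1 :: l, head None r, behead r)).
Proof. by case: r. Qed.

Lemma step_L p c l r :
  step (inl (inr p), (l, Some c, r)) = (inl (inr p), (behead l, head None l, Some c :: r)).
Proof. by case: l. Qed.

Lemma step_fin st l r : finalR st ->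
  step (inl (inl st), (l, None, r)) = (inr (eqf st), (l, None, r)).
Proof. by move=> h; rewrite /= h. Qed.

Lemma step_nfin st l r : ~~ finalR st ->
  step (inl (inl st), (l, None, r)) = (inl (inr (picks st)), (behead l, head None l, None :: r)).
Proof. by move=> h; rewrite /= (negbTE h); case: l. Qed.

Lemma step_turn p l r :
  step (inl (inr p), (l, None, r)) = (inl (inl (initR p)), (None :: l, head None r, behead r)).
Proof. by case: r. Qed.

Lemma iter1E (T : Type) (f : T -> T) x : iter 1 f x = f x.
Proof. by []. Qed.

Lemma sweepR cs st c l r :
  iter (size cs).+1 step (inl (inl st), (l, Some c, map Some cs ++ r)) =
  (inl (inl (sweep (rstep P) st (c :: cs)).2),
   (rev (map Some (sweep (rstep P) st (c :: cs)).1) ++ l, head None r, behead r)).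
Proof.
elim: cs st c l => [|d ds IH] st c l.
  by rewrite iterSr step_R.
rewrite [size _]/= iterSr step_R [map _ _]/= IH /=.
by rewrite [in RHS]rev_cons -cats1 -catA.
Qed.

Lemma sweepL ys y p r lb :
  iter (size ys).+1 step (inl (inr p), (rev (map Some ys) ++ lb, Some y, r)) =
  (inl (inr p), (behead lb, head None lb, map Some (rcons ys y) ++ r)).
Proof.
elim/last_ind: ys y r => [|zs z IH] y r.
  by rewrite iterSr step_L.
rewrite size_rcons iterSr map_rcons rev_rcons cat_cons step_L [behead _]/= [head _ _]/= IH.
by rewrite !map_rcons -!cats1 -!catA.
Qed.

Definition cfgR (st : rst n) (cs : seq (cell n)) (rb : seq symT) : config Mach :=
  (inl (inl st), ([:: None], head None (map Some cs), behead (map Some cs) ++ rb)).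

Lemma round_final st cs rb : cs != [::] -> head None rb = None -> behead rb = [::] ->
  finalR (sweep (rstep P) st cs).2 ->
  (iter (size cs).+1 step (cfgR st cs rb)).1 = inr (eqf (sweep (rstep P) st cs).2).
Proof.
case: cs => [|c cs] // _ hr br fin.
rewrite iterS /cfgR [head _ _]/= [behead _]/= sweepR hr br.
by rewrite step_fin.
Qed.

Lemma round_cont st cs rb : cs != [::] -> head None rb = None -> behead rb = [::] ->
  ~~ finalR (sweep (rstep P) st cs).2 ->
  iter ((size cs + size cs).+2) step (cfgR st cs rb) =
  cfgR (initR (picks (sweep (rstep P) st cs).2)) (sweep (rstep P) st cs).1 [:: None].
Proof.
case: cs => [|c cs] // _ hr br fin.
have -> : (size (c :: cs) + size (c :: cs)).+2 = 1 + ((size (c :: cs)) + (1 + (size cs).+1)).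
  by rewrite /=; lia.
rewrite iterD iterD iterD /cfgR [head _ _]/= [behead _]/= sweepR hr br !iter1E step_nfin //.
move: fin; set q := sweep (rstep P) st (c :: cs) => fin.
have sq : size q.1 = (size cs).+1 by rewrite sweep_size.
case/lastP E: q.1 sq => [|ys y] //; rewrite size_rcons => -[sy].
rewrite map_rcons rev_rcons cat_cons [behead _]/= [head _ _]/= [size _]/= -sy sweepL.
rewrite step_turn /=.
by rewrite map_rcons; case: ys {E sy}.
Qed.

End TMdef.

Section Abs.
Variable n : nat.
Variable P : 'I_n -> 'I_n -> bool.
Variables u v : seq 'I_n.

Definition K := size u + size v + 1.
Definition pad (T : seq (seq 'I_n)) : seq (oitem n) :=
  map Some (encT T) ++ nseq (K - size (encT T)) None.
Definition cellsOf eu du ev dv : seq (cell n) :=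
  zip (zip (Iu u du ++ None :: Iu v dv) (pad (Rg P (take eu u)))) (pad (Rg P (take ev v))).
Definition pend (w : seq 'I_n) e d := if e < d then ohead (drop e w) else None.
Definition Ok (w : seq 'I_n) e d := (e <= d) && (d <= e.+1) && (d <= size w).

Lemma size_pad_Rg w e : size w < K -> size (pad (Rg P (take e w))) = K.
Proof.
move=> h; rewrite /pad size_cat size_map size_nseq size_encT_Rg size_take.
rewrite /K in h *; case: ifP => h2; lia.
Qed.

Lemma sweepB_round w e d : Ok w e d -> size w < K ->
  exists s, sweep (stepB P) (ist (pend w e d)) (pad (Rg P (take e w))) = (pad (Rg P (take d w)), s).
Proof.
move=> /andP[/andP[h1 h2] h3] hK; rewrite /pend.
case: ltnP => hed; last first.
  have -> : d = e by lia.
  by exists None; rewrite sweep_idle.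
have hew : e < size w by lia.
case E: (drop e w) => [|a r].
  by move: (size_drop e w); rewrite E /=; lia.
have -> : d = e.+1 by lia.
exists None.
have tk : take e.+1 w = rcons (take e w) a.
  by rewrite (take_nth a hew) -[e in nth _ _ e]addn0 -nth_drop E.
rewrite /pad tk /Rg foldl_rcons -/(Rg P (take e w)) size_encT_ins size_encT_Rg size_take hew.
have -> : K - e = (K - e.+1).+1 by lia.
by rewrite /= sweep_ins.
Qed.

Lemma pend_next w d : d <= size w -> pend w d (nd w d) = ohead (drop d w).
Proof.
move=> h; rewrite /pend /nd; case: (ltnP d (size w)) => h1; first by rewrite ltnSn.
by rewrite ltnn drop_oversize.
Qed.

Lemma pend_some w e d : Ok w e d -> (pend w e d != None) = (e < d).
Proof.
move=> /andP[/andP[h1 h2] h3]; rewrite /pend; case: ifP => // hed.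
case E: (drop e w) => //.
by move: (size_drop e w); rewrite E /=; lia.
Qed.

Lemma ohead_none (w : seq 'I_n) d : d <= size w -> (ohead (drop d w) == None) = (d == size w).
Proof.
move=> h; have := size_drop d w; case: (drop d w) => [|a r] /= hs; apply/eqP/eqP => //; lia.
Qed.

Lemma size_cellsOf eu du ev dv : du <= size u -> dv <= size v ->
  size (cellsOf eu du ev dv) = K.
Proof.
move=> hu hv; rewrite /cellsOf !size_zip size_cat /= !size_Iu // !size_pad_Rg /K; lia.
Qed.

Lemma round_abs eu du ev dv : Ok u eu du -> Ok v ev dv ->
  let q := sweep (rstep P) (initR (pend u eu du, pend v ev dv)) (cellsOf eu du ev dv) in
  [/\ q.1 = cellsOf du (nd u du) dv (nd v dv),
      picks q.2 = (pend u du (nd u du), pend v dv (nd v dv)),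
      eqf q.2 = (pad (Rg P (take du u)) == pad (Rg P (take dv v))) &
      finalR q.2 = [&& eu == du, du == size u, ev == dv & dv == size v]].
Proof.
move=> Hu Hv.
have hu : du <= size u by case/andP: Hu.
have hv : dv <= size v by case/andP: Hv.
have hKu : size u < K by rewrite /K; lia.
have hKv : size v < K by rewrite /K; lia.
have [sB EB] := sweepB_round Hu hKu.
have [sC EC] := sweepB_round Hv hKv.
have EI := sweepI_all hu hv.
rewrite /initR /cellsOf /=.
rewrite (sweep_zip _ _ _ _ EI EB EC); first last.
- by rewrite !size_pad_Rg /K; lia.
- by rewrite size_pad_Rg // size_cat size_Iu // [size (_ :: _)]/= size_Iu // /K; lia.
split => //.
- by rewrite /picks !pend_next.
- rewrite /finalR /= !pend_some // !ohead_none //.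
  move: Hu Hv => /andP[/andP[a1 a2] _] /andP[/andP[b1 b2] _].
  rewrite !ltn_neqAle a1 b1 !andbT negb_or !negbK.
  by case: (eu == du); case: (ev == dv); case: (du == size u); case: (dv == size v).
Qed.

Lemma map_some_nseq (x y : seq (item n)) a b :
  map Some x ++ nseq a None = map Some y ++ nseq b None -> x = y.
Proof.
elim: x y => [|p x IH] [|q y] //=.
- by case: a.
- by case: b {IH}.
- by case=> -> E; rewrite (IH _ E).
Qed.

Lemma pad_eq T1 T2 : nonemp T1 -> nonemp T2 ->
  (pad T1 == pad T2) = (T1 == T2).
Proof.
move=> n1 n2; apply/eqP/eqP => [E|-> //].
apply: encT_inj n1 n2 _; exact: map_some_nseq E.
Qed.

Definition mu eu du ev dv := (size u - eu) + (size u - du) + (size v - ev) + (size v - dv).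

Lemma Ok_next w e d : Ok w e d -> Ok w d (nd w d).
Proof.
move=> /andP[/andP[h1 h2] h3]; rewrite /Ok /nd; case: ifP => h; apply/andP; split; lia.
Qed.

Lemma mu_dec eu du ev dv : Ok u eu du -> Ok v ev dv ->
  ~~ [&& eu == du, du == size u, ev == dv & dv == size v] ->
  mu du (nd u du) dv (nd v dv) < mu eu du ev dv.
Proof.
move=> /andP[/andP[h1 h2] h3] /andP[/andP[g1 g2] g3]; rewrite /mu /nd.
case: ifP => a; case: ifP => b; rewrite -?(eqn_leq) /=;
  move=> H; apply/negPn/negP => H'; apply: (negP H); apply/and4P; split; apply/eqP; lia.
Qed.

Lemma rounds N : forall eu du ev dv rb, Ok u eu du -> Ok v ev dv ->
  mu eu du ev dv <= N -> head None rb = None -> behead rb = [::] ->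
  exists2 t, t <= N.+1 * (K + K).+2 &
  (iter t (@tm_step _ (Mach P)) (cfgR P (initR (pend u eu du, pend v ev dv)) (cellsOf eu du ev dv) rb)).1
  = inr (Rg P u == Rg P v).
Proof.
elim: N => [|N IH] eu du ev dv rb Hu Hv Hmu hr br.
all: have hu : du <= size u by case/andP: Hu.
all: have hv : dv <= size v by case/andP: Hv.
all: have sc := size_cellsOf eu ev hu hv.
all: have nc : cellsOf eu du ev dv != [::] by rewrite -size_eq0 sc /K addn1.
all: have [E1 E2 E3 E4] := round_abs Hu Hv.
all: case F: (finalR (sweep (rstep P) (initR (pend u eu du, pend v ev dv)) (cellsOf eu du ev dv)).2).
- exists (size (cellsOf eu du ev dv)).+1; first by rewrite sc; lia.
  rewrite (round_final nc hr br F) E3.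
  move: F; rewrite E4 => /and4P[_ /eqP-> _ /eqP->]; rewrite !take_size.
  by rewrite pad_eq ?nonemp_Rg.
- by move: F; rewrite E4 /mu in Hmu *; move/negbT => F; exfalso; apply: (negP F);
    move: Hu Hv => /andP[/andP[h1 h2] h3] /andP[/andP[g1 g2] g3]; apply/and4P; split; apply/eqP; lia.
- exists (size (cellsOf eu du ev dv)).+1; first by rewrite sc; lia.
  rewrite (round_final nc hr br F) E3.
  move: F; rewrite E4 => /and4P[_ /eqP-> _ /eqP->]; rewrite !take_size.
  by rewrite pad_eq ?nonemp_Rg.
- have nF : ~~ finalR (sweep (rstep P) (initR (pend u eu du, pend v ev dv)) (cellsOf eu du ev dv)).2
    by rewrite F.
  have Hm : mu du (nd u du) dv (nd v dv) < mu eu du ev dv.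
    by apply: mu_dec Hu Hv _; rewrite -E4.
  have hN : mu du (nd u du) dv (nd v dv) <= N by lia.
  have [t Ht Hit] := IH du (nd u du) dv (nd v dv) [:: None] (Ok_next Hu) (Ok_next Hv)
     hN erefl erefl.
  exists (t + (size (cellsOf eu du ev dv) + size (cellsOf eu du ev dv)).+2).
    by rewrite sc; lia.
  by rewrite iterD (round_cont nc hr br nF) E1 E2.
Qed.

End Abs.

Lemma iter_halted n (P : 'I_n -> 'I_n -> bool) m (c : config (Mach P)) :
  (if c.1 is inr _ then true else false) -> iter m (@tm_step _ (Mach P)) c = c.
Proof.
move=> h; have E : @tm_step _ (Mach P) c = c.
  by case: c h => [[q|b] [[l x] r]].
by elim: m => // m IH; rewrite iterS IH E.
Qed.

Lemma map_cells (n : nat) (I : seq (inp n)) :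
  map (fun i => (i, None, None) : cell n) I =
  zip (zip I (nseq (size I) (None : oitem n))) (nseq (size I) (None : oitem n)).
Proof. by elim: I => //= i I ->. Qed.

Lemma init2 n (P : 'I_n -> 'I_n -> bool) (u v : seq 'I_n) :
  iter 2 (@tm_step _ (Mach P)) (@init_config _ (Mach P) (map Some u ++ None :: map Some v))
  = cfgR P (initR (None, None)) (cellsOf P u v 0 0 0 0) [::].
Proof.
have -> : cellsOf P u v 0 0 0 0 = map (@encC n) (map Some u ++ None :: map Some v).
  rewrite /cellsOf /Iu /= !drop0 !take0 /pad /= subn0.
  have -> : K u v = size (map (fun a => Some (Some a)) u ++ None :: map (fun a => Some (Some a)) v).
    by rewrite size_cat /= !size_map /K addn1 addnS.
  rewrite -map_cells map_cat /= -!map_comp.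
  by rewrite map_cat /= -!map_comp.
case: u => [|a u] /=; rewrite /cfgR /= ?cats0 -!map_comp //.
Qed.

Lemma wpq_gen n (P : 'I_n -> 'I_n -> bool) :
  word_problem_quadratic (fun u v : seq 'I_n => Rg P u == Rg P v).
Proof.
exists (Mach P), 6 => u v.
have Hu : Ok u 0 0 by rewrite /Ok /=.
have Hv : Ok v 0 0 by rewrite /Ok /=.
have [t Ht Hit] := @rounds n P u v (mu u v 0 0 0 0) 0 0 0 0 [::] Hu Hv (leqnn _) erefl erefl.
have hT : t + 2 <= 6 * (size u + size v).+1 ^ 2.
  move: Ht; rewrite /mu /K !subn0; nia.
have Hit' : (iter t (@tm_step _ (Mach P)) (cfgR P (initR (None, None)) (cellsOf P u v 0 0 0 0) [::])).1
   = inr (Rg P u == Rg P v) := Hit.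
rewrite /decides_within /run -(subnK hT) iterD iterD init2 iter_halted; last by rewrite Hit'.
by rewrite Hit'.
Qed.

Lemma Rl_Rg n (w : seq 'I_n) : Rl w = Rg (fun a z : 'I_n => a < z) w.
Proof.
rewrite /Rl /Rg; elim: w [::] => //= a w IH B; rewrite IH; congr foldl.
by elim: B => //= -[|x c] B' ->; rewrite /= ?ltnn.
Qed.

Lemma Rr_Rg n (w : seq 'I_n) : Rr w = Rg (fun a z : 'I_n => a <= z) w.
Proof.
rewrite /Rr /Rg; elim: w [::] => //= a w IH B; rewrite IH; congr foldl.
Qed.

Theorem proposition6p8 (n : nat) :
  word_problem_quadratic (@rps_eq n) /\ word_problem_quadratic (@lps_eq n).
Proof.
split.
- have [M [c H]] := wpq_gen (fun a z : 'I_n => a <= z).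
  by exists M, c => u v; rewrite /rps_eq !Rr_Rg; exact: H.
- have [M [c H]] := wpq_gen (fun a z : 'I_n => a < z).
  by exists M, c => u v; rewrite /lps_eq !Rl_Rg; exact: H.
Qed.
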